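(* For the Rogers--Szeg\H{o} polynomials, we have \[ \mu_{n,r,s} = \sum_{j=0}^r (-1)^{r-j}\begin{bmatrix} r \\ j \end{bmatrix}_q \begin{bmatrix} n+j \\ s \end{bmatrix}_q q^{\frac{r-j}{2}}q^{\frac{(n+j-s)^2}{2}}, \] where \( \begin{bmatrix} n \\ m \end{bmatrix}_q \) is the \( q \)-binomial coefficient given by \( \begin{bmatrix} n \\ m \end{bmatrix}_q =\frac{(1-q^n)(1-q^{n-1})\cdots(1-q^{n-m+1})}{(1-q^m)(1-q^{m-1})\cdots(1-q)} \).
   Context: Let \( (\Phi_n(z))_{n\ge0} \) be monic orthogonal polynomials on the unit circle (OPUC) with \( \deg\Phi_n=n \), \( \Phi_0=1 \), satisfying Szeg\H{o}'s recurrence \( \Phi_{n+1}(z) = z\Phi_n(z) - \overline{\alpha_n}\Phi_n^*(z) \), where \( \Phi_n^*(z)=z^n\overline{\Phi_n}(1/z) \) is the reverse polynomial and \( (\alpha_n)_{n\ge0} \) are the Verblunsky coefficients with \( |\alpha_n|<1 \). They are orthogonal with respect to the linear functional \( \mathcal{L} \) on Laurent polynomials with \( \mathcal{L}(1)=1 \) and \( \mathcal{L}(\Phi_m(z)\overline{\Phi_n}(1/z))=\kappa_n\delta_{m,n} \), \( \kappa_n>0 \). Define the inner product \( \langle f(z),g(z)\rangle=\mathcal{L}(f(z)\overline{g}(1/z)) \) and, for nonnegative integers \( n,r,s \), the generalized moment \( \mu_{n,r,s}=\langle \Phi_s(z),z^n\Phi_r(z)\rangle/\langle\Phi_s(z),\Phi_s(z)\rangle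 \). For \( q\in(0,1) \), the Rogers--Szeg\H{o} polynomials are the OPUC with Verblunsky coefficients \( \alpha_n=(-1)^nq^{(n+1)/2} \), \( n\ge0 \). *)

(* Defs.v *)
From HB Require Import structures.
From mathcomp Require Import all_boot all_order all_algebra.
From mathcomp Require Import complex.
From mathcomp Require Import reals.
Set Implicit Arguments. Unset Strict Implicit. Unset Printing Implicit Defensive.
Import Order.TTheory GRing.Theory Num.Theory.
Local Open Scope ring_scope.

Section OPUC.
Variable C : numClosedFieldType.

(* reverse polynomial Phi_n^*(z) = z^n conj(Phi_n)(1/z), for p of degree <= n *)
Definition rev_star (n : nat) (p : {poly C}) : {poly C} :=
  \poly_(k < n.+1) (p`_(n - k))^*.

Fixpoint Phi (alpha : nat -> C) (n : nat) : {poly C} :=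
  match n with
  | 0 => 1
  | m.+1 => 'X * Phi alpha m - (alpha m)^* *: rev_star m (Phi alpha m)
  end.

(* A linear functional L on Laurent polynomials is determined by its moments
   c k = L(z^k), k : int.  <f,g> = L(f(z) conj(g)(1/z)). *)
Definition ip (c : int -> C) (f g : {poly C}) : C :=
  \sum_(j < size f) \sum_(k < size g)
     f`_j * (g`_k)^* * c (j%:Z - k%:Z).

Definition orthogonal_functional (alpha : nat -> C) (c : int -> C) : Prop :=
  c 0 = 1 /\
  exists kappa : nat -> C,
    (forall n, 0 < kappa n) /\
    (forall m n, ip c (Phi alpha m) (Phi alpha n) = if m == n then kappa n else 0).

Definition gen_moment (alpha : nat -> C) (c : int -> C) (n r s : nat) : C :=
  ip c (Phi alpha s) ('X^n * Phi alpha r) / ip c (Phi alpha s) (Phi alpha s).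

End OPUC.

(* q-binomial coefficient [n choose m]_q as the product quotient
   (1-q^n)...(1-q^(n-m+1)) / ((1-q^m)...(1-q)); equals 0 when m > n. *)
Definition qbinom (F : fieldType) (q : F) (n m : nat) : F :=
  (\prod_(i < m) (1 - q ^+ (n - i))) / (\prod_(i < m) (1 - q ^+ i.+1)).

Definition rs_alpha (R : realType) (q : R) (n : nat) : R[i] :=
  (((-1) ^+ n * Num.sqrt q ^+ n.+1 : R)%:C)%C.

(* Main.v *)
Require Import Defs.
From HB Require Import structures.
From mathcomp Require Import all_boot all_order all_algebra.
From mathcomp Require Import complex.
From mathcomp Require Import reals.
From mathcomp Require Import zify ring lra.
Import Order.TTheory GRing.Theory Num.Theory.
Local Open Scope ring_scope.

Module Aux.
Set Implicit Arguments. Unset Strict Implicit. Unset Printing Implicit Defensive.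

Section Real.
Variable R : realFieldType.
Variable t : R.
Hypothesis t0 : 0 < t.
Hypothesis t1 : t < 1.
Local Notation q := (t ^+ 2).



Fixpoint gb (n k : nat) : R :=
  match n, k with
  | 0, 0 => 1
  | 0, _.+1 => 0
  | _.+1, 0 => 1
  | n'.+1, k'.+1 => gb n' k' + q ^+ k'.+1 * gb n' k'.+1
  end.

Definition D k := \prod_(i < k) (1 - q ^+ i.+1).
Definition N n k := \prod_(i < k) (1 - q ^+ (n - i)).

Lemma q0 : 0 < q. Proof. exact: exprn_gt0. Qed.
Lemma q1 : q < 1. Proof. by rewrite exprn_ilt1 // ltW. Qed.

Lemma N0 n k : (n < k)%N -> N n k = 0.
Proof.
elim: k => // k IH; rewrite ltnS leq_eqVlt => /orP[/eqP->|h].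
  by rewrite /N big_ord_recr /= subnn expr0 subrr mulr0.
by rewrite /N big_ord_recr /= -/(N n k) IH // mul0r.
Qed.

Lemma gbN n k : gb n k * D k = N n k.
Proof.
elim: n k => [|n IH] [|k].
- by rewrite /D /N !big_ord0 mulr1.
- by rewrite /= mul0r N0.
- by rewrite /D /N !big_ord0 mulr1.
rewrite /= /D big_ord_recr /= -/(D k) /N big_ord_recl /=.
rewrite subn0.
rewrite /=; under eq_bigr => i _ do rewrite subSS.
rewrite -/(N n k).
have h1 := IH k.
have h2 := IH k.+1.
rewrite /D big_ord_recr /= -/(D k) /N big_ord_recr /= -/(N n k) in h2.
have -> : (gb n k + q ^+ k.+1 * gb n k.+1) * (D k * (1 - q ^+ k.+1))
   = gb n k * D k * (1 - q ^+ k.+1) + q ^+ k.+1 * (gb n k.+1 * (D k * (1 - q ^+ k.+1))) by ring.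
rewrite h1 h2.
case: (leqP k n) => hk.
  have -> : q ^+ k.+1 * (N n k * (1 - q ^+ (n - k))) = N n k * (q ^+ k.+1 - q ^+ (k.+1 + (n - k))) by rewrite exprD; ring.
  rewrite addSn subnKC //; ring.
by rewrite N0 //; ring.
Qed.

Lemma D_neq0 k : D k != 0.
Proof.
apply/prodf_neq0 => i _; rewrite subr_eq0 eq_sym lt_eqF //.
by rewrite exprn_ilt1 // ?ltW ?q0 ?q1.
Qed.

Lemma gbE n k : gb n k = N n k / D k.
Proof. by rewrite -gbN mulfK ?D_neq0. Qed.

Lemma gb_small n k : (n < k)%N -> gb n k = 0.
Proof. by move=> h; rewrite gbE N0 // mul0r. Qed.

Lemma gbn0 n : gb n 0 = 1. Proof. by case: n. Qed.

Lemma gbnn n : gb n n = 1.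
Proof. by elim: n => //= n ->; rewrite gb_small // mulr0 addr0. Qed.

Lemma ND n k : (k <= n)%N -> N n k * D (n - k) = D n.
Proof.
elim: k => [|k IH] h; first by rewrite /N big_ord0 mul1r subn0.
rewrite /N big_ord_recr /= -/(N n k) -IH 1?ltnW //.
have -> : (n - k = (n - k.+1).+1)%N by lia.
rewrite /D (big_ord_recr (n - k.+1)) /= -/(D (n - k.+1)).
have -> : ((n - k.+1).+1 = n - k)%N by lia.
ring.
Qed.

Lemma gb_sym n k : (k <= n)%N -> gb n (n - k) = gb n k.
Proof.
move=> h.
have e1 : gb n k * D k * D (n - k) = D n by rewrite gbN ND.
have e2 : gb n (n - k) * D (n - k) * D k = D n.
  by rewrite gbN -{2}(subKn h) ND // leq_subr.
apply: (mulIf (D_neq0 k)); apply: (mulIf (D_neq0 (n - k))).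
by rewrite e1 -e2; ring.
Qed.


Lemma QB s x : \prod_(l < s) (1 + x * q ^+ l) =
  \sum_(i < s.+1) gb s i * t ^+ (i * i.-1) * x ^+ i.
Proof.
elim: s x => [|s IH] x.
  by rewrite big_ord0 big_ord1 /= expr0 !mulr1.
rewrite big_ord_recl expr0 mulr1.
under eq_bigr => l _ do rewrite lift0 exprS mulrA.
rewrite IH (big_ord_recl s.+1) gbn0 !expr0 !mulr1.
under [X in _ = _ + X]eq_bigr => i _ do rewrite lift0 /= mulrDl mulrDl.
rewrite big_split /= mulrDl mul1r.
rewrite [X in _ = 1 + (_ + X)]big_ord_recr /= (@gb_small s s.+1) // mulr0 !mul0r addr0.
rewrite [X in X + _ = _]big_ord_recl gbn0 !expr0 !mulr1 -addrA; congr (_ + _).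
rewrite addrC mulr_sumr; congr (_ + _); apply: eq_bigr => i _.
  rewrite exprMn -exprM.
  have -> : (i.+1 * i = i * i.-1 + 2 * i)%N by case: i => [[|i]] /= *; nia.
  rewrite exprD exprS exprM; ring.
rewrite lift0 exprMn -exprM; ring.
Qed.


Definition F s m := \sum_(k < s.+1) (-1) ^+ (s - k) * gb s k * t ^+ (s - k)
   * t ^+ (absz (k%:Z - m%:Z) ^ 2).

Lemma tn0 n : t ^+ n != 0.
Proof. by rewrite expf_neq0 // gt_eqF. Qed.

Lemma Fexp s m : F s m = t ^+ (absz (m%:Z - s%:Z) ^ 2) *
   \prod_(l < s) (1 + (- (t ^+ (2 * m.+1) / t ^+ (2 * s))) * q ^+ l).
Proof.
rewrite QB /F (reindex_inj rev_ord_inj) mulr_sumr; apply: eq_bigr => i _ /=.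
have hi : (i <= s)%N by rewrite -ltnS.
rewrite subSS subKn // gb_sym //.
have E : (absz (m%:Z - s%:Z) ^ 2 + i * i.-1 + 2 * m.+1 * i =
     (i + absz ((s - i)%:Z - m%:Z) ^ 2) + 2 * s * i)%N.
  move: (i : nat) hi => [|j] hj /=; nia.
set e := absz ((s - i)%:Z - m%:Z).
set M := absz (m%:Z - s%:Z).
have key : t ^+ i * t ^+ (e ^ 2) = t ^+ (M ^ 2) * t ^+ (i * i.-1) * t ^+ (2 * m.+1 * i) / t ^+ (2 * s * i).
  by rewrite -!exprD E (exprD t _ (2 * s * i)) mulfK ?tn0.
rewrite [in RHS]exprNn expr_div_n -!exprM.
transitivity ((-1) ^+ i * gb s i * (t ^+ i * t ^+ (e ^ 2))); first by ring.
rewrite key; ring.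
Qed.

Lemma Fprod s m :
  \prod_(l < s) (1 + (- (t ^+ (2 * m.+1) / t ^+ (2 * s))) * q ^+ l) = N m s.
Proof.
case: (leqP s m) => hsm.
  rewrite /N (reindex_inj rev_ord_inj); apply: eq_bigr => l _ /=.
  have hl : (l < s)%N by [].
  rewrite mulNr -!exprM mulrAC -exprD.
  have -> : (2 * m.+1 + 2 * (s - l.+1) = 2 * (m - l) + 2 * s)%N by nia.
  by rewrite exprD mulfK ?tn0.
rewrite N0 //.
have h : (s - m.+1 < s)%N by lia.
rewrite (bigD1 (Ordinal h)) //= mulNr -!exprM mulrAC -exprD.
have -> : (2 * m.+1 + 2 * (s - m.+1) = 2 * s)%N by nia.
by rewrite divff ?tn0 // subrr mul0r.
Qed.

Lemma Nss s : N s s = D s.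
Proof. by rewrite -gbN gbnn mul1r. Qed.

Lemma KI s m : F s m = gb m s * t ^+ (absz (m%:Z - s%:Z) ^ 2) * F s s.
Proof.
rewrite !Fexp !Fprod Nss -gbN subrr /= expr0 mul1r; ring.
Qed.

Lemma Fss s : F s s = D s.
Proof. by rewrite Fexp Fprod Nss subrr /= expr0 mul1r. Qed.

End Real.

Section Cx.
Variable R : rcfType.
Variables (t : R) (t0 : 0 < t) (t1 : t < 1).
Variable alpha : nat -> R[i].
Hypothesis halpha : forall n, alpha n = (((-1) ^+ n * t ^+ n.+1)%:C)%C.

Lemma cr (x : R) : (x%:C)%C^* = (x%:C)%C.
Proof. apply/CrealP. apply/complex_realP. by exists x. Qed.

Notation CC := (complex_complex__canonical__Num_ClosedField R).
Lemma rcM (x y : R) : ((x * y)%:C = (x%:C * y%:C : CC))%C.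
Proof. by rewrite rmorphM. Qed.
Lemma rcB (x y : R) : ((x - y)%:C = (x%:C - y%:C : CC))%C.
Proof. by rewrite rmorphB. Qed.
Lemma rcN (x : R) : ((- x)%:C = (- x%:C : CC))%C.
Proof. by rewrite rmorphN. Qed.
Lemma rcS I r (P0 : pred I) (G : I -> R) : ((\sum_(i <- r | P0 i) G i)%:C = (\sum_(i <- r | P0 i) (G i)%:C : CC))%C.
Proof. by rewrite rmorph_sum. Qed.

Definition E r k : R := (-1) ^+ (r - k) * gb t r k * t ^+ (r - k).
Definition P r : {poly R[i]} := \poly_(k < r.+1) ((E r k)%:C)%C.

Lemma sgn2 a b c0 : (-1) ^+ (a + b) * (-1) ^+ (a + c0) = (-1) ^+ (b + c0) :> R.
Proof.
rewrite -exprD -[LHS]signr_odd -[RHS]signr_odd !oddD.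
by case: (odd a); case: (odd b); case: (odd c0).
Qed.

Lemma Phi_P r : Phi alpha r = P r.
Proof.
elim: r => [|r IH].
  apply/polyP => k; rewrite /= /P coef_poly coef1.
  case: k => [|k] //=; by rewrite /E gbn0 !expr0 !mulr1.
rewrite /= IH; apply/polyP => k.
rewrite coefB coefXM coefZ /rev_star !coef_poly halpha. have := cr ((-1) ^+ r * t ^+ r.+1). move=> ->.
case: k => [|k] /=.
  rewrite subn0 ltnSn cr /E subnn (gbnn t0 t1) (gbn0 t r.+1) !expr0 !mulr1 sub0r -rcN.
  congr (_ %:C)%C; rewrite subn0 !exprS; ring.
rewrite !ltnS.
case: (ltngtP k r) => hk.
- rewrite leq_subr cr -rcM -rcB; congr (_ %:C)%C.
  rewrite /E subSS /= subKn // gb_sym //.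
  move: hk; set d := (r - k)%N => hk.
  have hr : r = (k + d)%N by rewrite /d subnKC // ltnW.
  have s1 : (-1) ^+ r * (-1) ^+ k.+1 = - (-1) ^+ d :> R.
    by rewrite hr -addn1 sgn2 exprD expr1 mulrN1.
  have s2 : t ^+ r.+1 * t ^+ k.+1 = t ^+ 2 ^+ k.+1 * t ^+ d.
    by rewrite -exprM -!exprD hr; congr (_ ^+ _); lia.
  transitivity ((-1) ^+ d * gb t r k * t ^+ d -
    ((-1) ^+ r * (-1) ^+ k.+1) * (t ^+ r.+1 * t ^+ k.+1) * gb t r k.+1); first by ring.
  rewrite s1 s2; ring.
- by rewrite mulr0 subr0.
- subst k; rewrite mulr0 subr0 /E !subnn (gbnn t0 t1) /=.
  by rewrite (gbnn t0 t1) (gb_small t0 t1 (ltnSn r)) mulr0 addr0.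
Qed.


Lemma sum_wide n A (h : (n <= A)%N) (H : nat -> R[i]) :
  (forall j, (n <= j)%N -> H j = 0) -> \sum_(j < n) H j = \sum_(j < A) H j.
Proof.
move=> H0; rewrite (big_ord_widen A H h) big_mkcond; apply: eq_bigr => i _.
by case: ifP => // /negbT; rewrite -leqNgt => /H0 ->.
Qed.

Lemma ip_wide (c : int -> R[i]) (f g : {poly R[i]}) A B : (size f <= A)%N -> (size g <= B)%N ->
  ip c f g = \sum_(j < A) \sum_(k < B) f`_j * (g`_k)^* * c (j%:Z - k%:Z).
Proof.
move=> hA hB; rewrite /ip (sum_wide hA (H := fun j => \sum_(k < size g) f`_j * (g`_k)^* * c (j%:Z - k%:Z))).
  apply: eq_bigr => j _; apply: (sum_wide hB (H := fun k => f`_j * (g`_k)^* * c (j%:Z - k%:Z))) => k hk.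
  by rewrite (nth_default 0 hk) conjC0 mulr0 mul0r.
move=> j hj; apply: big1 => k _.
by rewrite (nth_default 0 hj) !mul0r.
Qed.

Lemma size_P r : (size (P r) <= r.+1)%N.
Proof. exact: size_poly. Qed.

Lemma E_big r k : (r < k)%N -> E r k = 0.
Proof. by move=> h; rewrite /E (gb_small t0 t1 h) mulr0 mul0r. Qed.

Lemma coefP r k : (P r)`_k = ((E r k)%:C)%C.
Proof.
rewrite coef_poly; case: ifP => // /negbT; rewrite -leqNgt => h.
by rewrite E_big.
Qed.

Lemma Err r : E r r = 1.
Proof. by rewrite /E subnn (gbnn t0 t1) !expr0 !mulr1. Qed.

Definition T (k : nat) : R[i] := ((t ^+ (k ^ 2))%:C)%C.

Lemma step m (g : nat -> R[i]) : (forall j, (j <= m)%N -> g j = T j) ->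
  \sum_(j < m.+2) ((E m.+1 j)%:C)%C * g j = 0 -> g m.+1 = T m.+1.
Proof.
move=> IH H.
have HF : \sum_(j < m.+2) ((E m.+1 j)%:C)%C * T j = 0.
  have h := KI t0 t1 m.+1 0.
  rewrite (gb_small t0 t1 (ltn0Sn m)) !mul0r /F in h.
  transitivity (((0:R)%:C)%C); last by [].
  rewrite -h rcS; apply: eq_bigr => j _.
  by rewrite subr0 /T -rcM.
rewrite big_ord_recr /= Err in H.
rewrite big_ord_recr /= Err in HF.
have e : \sum_(i < m.+1) ((E m.+1 i)%:C)%C * g i = \sum_(i < m.+1) ((E m.+1 i)%:C)%C * T i.
  by apply: eq_bigr => i _; rewrite IH // -ltnS.
rewrite e in H.
have H3 : \sum_(i < m.+1) ((E m.+1 i)%:C)%C * T i + ((1 : R)%:C)%C * g m.+1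
  = \sum_(i < m.+1) ((E m.+1 i)%:C)%C * T i + ((1 : R)%:C)%C * T m.+1 by rewrite H HF.
have H2 := @GRing.addrI _ _ _ _ H3.
have e1 : ((1 : R)%:C)%C = 1 by [].
by rewrite e1 !mul1r in H2.
Qed.


Variable c : int -> R[i].
Hypothesis hc0 : c 0 = 1.
Hypothesis horth : forall m n, m != n -> ip c (Phi alpha m) (Phi alpha n) = 0.

Lemma cpos m : forall k, (k <= m)%N -> c (Posz k) = T k /\ c (- Posz k) = T k.
Proof.
elim: m => [|m IH] k.
  rewrite leqn0 => /eqP ->; rewrite oppr0 hc0; split => //.
rewrite leq_eqVlt => /orP[/eqP ->|]; last by rewrite ltnS; apply: IH.
split.
  apply: (@step m (fun j => c (Posz j))) => [j hj|]; first by case: (IH j hj).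
  have := horth (m := m.+1) (n := 0) isT.
  rewrite [Phi alpha m.+1]Phi_P /= (@ip_wide c _ _ m.+2 1) ?size_P ?size_poly1 //.
  move=> h; rewrite -[RHS]h; apply: eq_bigr => j _.
  by rewrite big_ord1 coefP /= coef1 /= conjC1 mulr1 subr0.
apply: (@step m (fun j => c (- Posz j))) => [j hj|]; first by case: (IH j hj).
have := horth (m := 0) (n := m.+1) isT.
rewrite [Phi alpha m.+1]Phi_P /= (@ip_wide c _ _ 1 m.+2) ?size_P ?size_poly1 // big_ord1.
move=> h; rewrite -[RHS]h; apply: eq_bigr => j _.
by rewrite coefP coef1 /= cr mul1r sub0r.
Qed.

Lemma cT z : c z = ((t ^+ (absz z ^ 2))%:C)%C.
Proof.
case: z => k.
  by case: (cpos (leqnn k)).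
by rewrite NegzE; case: (cpos (leqnn k.+1)) => _ ->; rewrite /T abszN.
Qed.


Lemma ipP s (g : {poly R[i]}) B (G : nat -> R) : (size g <= B)%N ->
  (forall k, g`_k = ((G k)%:C)%C) ->
  ip c (P s) g = ((\sum_(k < B) G k * F t s k)%:C)%C.
Proof.
move=> hB hg.
rewrite (@ip_wide c _ _ s.+1 B) ?size_P // exchange_big rcS; apply: eq_bigr => k _.
rewrite /F mulr_sumr rcS; apply: eq_bigr => j _.
rewrite coefP hg cr cT -!rcM; congr (_%:C)%C; rewrite /E; ring.
Qed.

Lemma Fss_neq0 s : ((F t s s)%:C)%C != 0 :> R[i].
Proof.
apply/eqP => h; have := D_neq0 t0 t1 s; rewrite -(Fss t0 t1) => /eqP; apply.
by apply: complexI; rewrite h.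
Qed.

Lemma moment n r s : gen_moment alpha c n r s =
  ((\sum_(j < r.+1) E r j * gb t (n + j) s * t ^+ (absz ((n + j)%:Z - s%:Z) ^ 2))%:C)%C.
Proof.
rewrite /gen_moment !Phi_P.
rewrite (@ipP s _ (n + r.+1) (fun k => if (k < n)%N then 0 else E r (k - n))); first last.
- by move=> k; rewrite coefXnM coefP; case: ifP.
- apply: (leq_trans (size_polyMleq _ _)); rewrite size_polyXn /=.
  by rewrite leq_add2l size_P.
rewrite (@ipP s _ s.+1 (E s)) ?size_P //; last by exact: coefP.
have den : \sum_(k < s.+1) E s k * F t s k = F t s s.
  rewrite big_ord_recr /= big1 => [|k _]; first by rewrite add0r Err mul1r.
  by rewrite (KI t0 t1) (gb_small t0 t1 (ltn_ord k)) !mul0r mulr0.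
rewrite den big_split_ord /= big1 => [|k _]; last first.
  by rewrite ltn_ord mul0r.
rewrite add0r.
have -> : \sum_(i < r.+1) (if (n + i < n)%N then 0 else E r (n + i - n)) * F t s (n + i)
  = (\sum_(j < r.+1) E r j * gb t (n + j) s * t ^+ (absz ((n + j)%:Z - s%:Z) ^ 2)) * F t s s.
  rewrite mulr_suml; apply: eq_bigr => j _.
  rewrite ltnNge leq_addr /= addKn (KI t0 t1); ring.
by rewrite rcM mulfK ?Fss_neq0.
Qed.

End Cx.

End Aux.
Import Aux.

Theorem proposition4p14 (R : realType) (q : R) (hq0 : 0 < q) (hq1 : q < 1)
  (c : int -> R[i]) (hL : orthogonal_functional (rs_alpha q) c)
  (n r s : nat) :
  gen_moment (rs_alpha q) c n r s =
  ((\sum_(j < r.+1)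
      (-1) ^+ (r - j) * qbinom q r j * qbinom q (n + j) s
      * Num.sqrt q ^+ (r - j)
      * Num.sqrt q ^+ (absz ((n + j)%:Z - s%:Z) ^ 2)) : R)%:C%C.
Proof.
have t0 : 0 < Num.sqrt q by rewrite sqrtr_gt0.
have hq2 : q = Num.sqrt q ^+ 2 by rewrite sqr_sqrtr // ltW.
have t1 : Num.sqrt q < 1 by rewrite -sqrtr1 ltr_sqrt // ltr01.
case: hL => hc0 [kappa [_ hk]].
have horth : forall m n', m != n' ->
    ip c (Phi (rs_alpha q) m) (Phi (rs_alpha q) n') = 0.
  by move=> m n' h; rewrite hk (negbTE h).
have qb : forall a b, qbinom q a b = gb (Num.sqrt q) a b.
  by move=> a b; rewrite /qbinom (gbE t0 t1) /N /D -hq2.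
rewrite (@moment R (Num.sqrt q) t0 t1 (rs_alpha q) (fun k => erefl) c hc0 horth).
apply: f_equal; apply: eq_bigr => j _; rewrite /E !qb; set t := Num.sqrt q; ring.
Qed.
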